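(* Let $A$ be a commutative ring and $L$ a finitely generated projective $A$-module of constant rank $1$. If $L_1,\dots,L_n$ are finitely many $A$-submodules of $L$ with $L=\bigcup_{k=1}^n L_k$, then $L=L_k$ for some $k$. *)

(* Defs.v *)
From HB Require Import structures.
From mathcomp Require Import all_boot all_order all_algebra.
Set Implicit Arguments. Unset Strict Implicit. Unset Printing Implicit Defensive.
Import GRing.Theory.
Local Open Scope ring_scope.

(* A commutative ring A (comPzRingType: the zero ring allowed),
   an A-module L : lmodType A. *)

Definition prime_ideal (A : comPzRingType) (p : A -> Prop) : Prop :=
  [/\ p 0,
      (forall x y, p x -> p y -> p (x + y)),
      (forall a x, p x -> p (a * x)),
      ~ p 1
    & (forall x y, p (x * y) -> p x \/ p y)].

Definition submodule (A : pzRingType) (L : lmodType A) (S : L -> Prop) : Prop :=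
  [/\ S 0,
      (forall u v, S u -> S v -> S (u + v))
    & (forall (a : A) u, S u -> S (a *: u))].

Definition fin_generated (A : pzRingType) (L : lmodType A) : Prop :=
  exists (n : nat) (g : 'I_n -> L),
    forall x : L, exists c : 'I_n -> A, x = \sum_(i < n) c i *: g i.

Definition projective (A : pzRingType) (L : lmodType A) : Prop :=
  forall (M N : lmodType A) (f : {linear M -> N}) (g : {linear L -> N}),
    (forall y : N, exists x : M, f x = y) ->
    exists h : {linear L -> M}, forall x : L, f (h x) = g x.

(* The localization L_p (p a prime ideal) is a free A_p-module of rank 1,
   written out elementwise: some x/1 is an A_p-basis of L_p, i.e.
   (generation)   every m/1 is an A_p-multiple (a/s) (x/1): s m = a x for
                  some s not in p (the extra annihilating factor of the
                  localization equality is absorbed into s);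
   (independence) if (a/1)(x/1) = 0 in L_p, i.e. t a x = 0 for some t not
                  in p, then a/1 = 0 in A_p, i.e. u a = 0 for some u not in p.
   (Any basis m/s of a rank-1 free module can be rescaled by the unit s/1, so
   requiring the basis to be of the form x/1 loses no generality.) *)
Definition loc_free_rank1 (A : comPzRingType) (L : lmodType A) (p : A -> Prop) : Prop :=
  exists x : L,
    (forall m : L, exists (s a : A), ~ p s /\ s *: m = a *: x) /\
    (forall a : A, (exists t : A, ~ p t /\ t *: (a *: x) = 0) ->
                   exists u : A, ~ p u /\ u * a = 0).

Definition const_rank1 (A : comPzRingType) (L : lmodType A) : Prop :=
  forall p : A -> Prop, prime_ideal p -> loc_free_rank1 L p.

(* Main.v *)
Require Import Defs.
From HB Require Import structures.
From mathcomp Require Import all_boot all_order all_algebra.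
From mathcomp Require Import boolp classical_sets.
From Stdlib Require Import Classical IndefiniteDescription.
Local Open Scope ring_scope.
Import GRing.Theory.
Set Implicit Arguments. Unset Strict Implicit.

Definition ideal (A : comPzRingType) (I : A -> Prop) : Prop :=
  [/\ I 0, (forall x y, I x -> I y -> I (x + y)) & (forall a x, I x -> I (a * x))].

Definition maxideal (A : comPzRingType) (m : A -> Prop) : Prop :=
  [/\ ideal m, ~ m 1 &
      forall J, ideal J -> (forall x, m x -> J x) -> ~ J 1 -> forall x, J x -> m x].

Lemma ideal_opp (A : comPzRingType) (I : A -> Prop) x : ideal I -> I x -> I (- x).
Proof. by case=> _ _ hm Ix; rewrite -mulN1r; apply: hm. Qed.

Lemma ideal_sub (A : comPzRingType) (I : A -> Prop) x y :
  ideal I -> I (x + y) -> I y -> I x.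
Proof.
move=> hI hxy hy; have := (let: And3 _ ha _ := hI in ha) _ _ hxy (ideal_opp hI hy).
by rewrite addrK.
Qed.

Lemma max_prime (A : comPzRingType) (m : A -> Prop) : maxideal m -> prime_ideal m.
Proof.
move=> [[m0 mD mM] m1 mmax]; split=> //.
move=> x y mxy; case: (classic (m x)) => [|nx]; [by left|right].
pose J := fun z => exists u c, m u /\ z = u + c * x.
have hJ : ideal J.
  split.
  - by exists 0, 0; rewrite mul0r addr0.
  - move=> z1 z2 [u1 [c1 [h1 ->]]] [u2 [c2 [h2 ->]]].
    exists (u1 + u2), (c1 + c2); split; first exact: mD.
    by rewrite mulrDl addrACA.
  - move=> a z [u [c [h ->]]]; exists (a * u), (a * c); split; first exact: mM.
    by rewrite mulrDr mulrA.
have mJ : forall z, m z -> J z by move=> z mz; exists z, 0; rewrite mul0r addr0.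
case: (classic (J 1)) => [[u [c [mu e]]]|nJ1]; last first.
  by exfalso; apply: nx; apply: (mmax J hJ mJ nJ1); exists 0, 1; rewrite add0r mul1r.
have -> : y = u * y + c * (x * y) by rewrite mulrA -mulrDl -e mul1r.
by apply: mD; [rewrite mulrC; apply: mM|apply: mM].
Qed.

Lemma exists_max (A : comPzRingType) (I : A -> Prop) :
  ideal I -> ~ I 1 -> exists m, maxideal m /\ forall x, I x -> m x.
Proof.
move=> hI nI1.
pose P : set (set A) := fun J => J = set0 \/ [/\ ideal J, (forall x, I x -> J x) & ~ J 1].
have [M [PM Mmax]] : exists M, P M /\ forall B, (M `<` B)%classic -> ~ P B.
  apply: Zorn_bigcup => F FP Ftot.
  case: (classic (exists X, F X /\ X <> set0)) => [[X [FX X0]]|nX]; last first.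
    left; apply/seteqP; split=> z //= [Y FY Yz].
    apply: nX; exists Y; split=> // Y0; by rewrite Y0 in Yz.
  have idl Y : F Y -> Y <> set0 -> [/\ ideal Y, (forall x, I x -> Y x) & ~ Y 1].
    by move=> FY Y0; case: (FP Y FY).
  have [[X0' XD XM] XI X1] := idl X FX X0.
  right; split.
  - split.
    + by exists X.
    + move=> u v [Y1 FY1 hu] [Y2 FY2 hv].
      have ne1 : Y1 <> set0 by move=> e; rewrite e in hu.
      have ne2 : Y2 <> set0 by move=> e; rewrite e in hv.
      have [[_ D1 _] _ _] := idl _ FY1 ne1; have [[_ D2 _] _ _] := idl _ FY2 ne2.
      case: (Ftot _ _ FY1 FY2) => sub.
      * by exists Y2 => //; apply: D2 => //; apply: sub.
      * by exists Y1 => //; apply: D1 => //; apply: sub.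
    + move=> a u [Y FY hu]; have ne : Y <> set0 by move=> e; rewrite e in hu.
      have [[_ _ M1] _ _] := idl _ FY ne; by exists Y => //; apply: M1.
  - by move=> x Ix; exists X => //; apply: XI.
  - move=> [Y FY hu]; have ne : Y <> set0 by move=> e; rewrite e in hu.
    by have [_ _ ] := idl _ FY ne; apply.
case: PM => [M0|[hM IM M1]].
  exfalso; apply: (Mmax I); last by right; split.
  rewrite M0; split=> // sub; case: hI => I0 _ _; exact: (sub 0 I0).
exists M; split=> //; split=> // J hJ MJ J1 x Jx.
apply: NNPP => nMx; apply: (Mmax J).
  by split=> // sub; apply: nMx; apply: sub.
right; split=> // y Iy; exact: MJ (IM _ Iy).
Qed.

Section Main.
Variables (A : comPzRingType) (L : lmodType A).

Definition gen (p : A -> Prop) (y : L) :=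
  forall z : L, exists s b, ~ p s /\ s *: z = b *: y.

Lemma prime_mul (p : A -> Prop) s t : prime_ideal p -> ~ p s -> ~ p t -> ~ p (s * t).
Proof. by case=> _ _ _ _ hp ns nt /hp [|]. Qed.

Lemma gen_trans (p : A -> Prop) y y' w s :
  prime_ideal p -> gen p y -> ~ p w -> s *: y' = w *: y -> gen p y'.
Proof.
move=> pp gy nw e z; have [t [b [nt ht]]] := gy z.
exists (w * t), (b * s); split; first exact: prime_mul.
by rewrite -[LHS]scalerA ht scalerA [w * b]mulrC -[LHS]scalerA -e scalerA.
Qed.

Lemma gen_sub (p q : A -> Prop) y : (forall x, q x -> p x) -> gen p y -> gen q y.
Proof.
move=> qp gy z; have [s [b [ns hs]]] := gy z; exists s, b; split=> //.
by move=> /qp.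
Qed.

Variable n : nat.

Lemma avoid_e (M : 'I_n -> A -> Prop) (m : A -> Prop) (l : seq 'I_n) :
  prime_ideal m ->
  (forall j, j \in l -> ideal (M j) /\ exists a, M j a /\ ~ m a) ->
  exists e, ~ m e /\ forall j, j \in l -> M j e.
Proof.
move=> pm; elim: l => [|k l IH] H.
  by exists 1; split=> //; case: pm.
have [e [ne he]] : exists e, ~ m e /\ forall j, j \in l -> M j e.
  by apply: IH => j jl; apply: H; rewrite inE jl orbT.
have [[_ _ hk] [a [Ma na]]] := H k (mem_head _ _).
exists (a * e); split; first exact: prime_mul.
move=> j; rewrite inE => /orP [/eqP ->|jl].
  by rewrite mulrC; apply: hk.
have jl' : j \in k :: l by rewrite inE jl orbT.
have [[_ _ hj] _] := H j jl'.
by apply: hj; apply: he.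
Qed.

Lemma avoid (M : 'I_n -> A -> Prop) (X : 'I_n -> L) (l : seq 'I_n) :
  (forall j, maxideal (M j)) -> (forall j, gen (M j) (X j)) ->
  exists y, forall j, j \in l -> gen (M j) y.
Proof.
move=> Mm gX; elim: l => [|k l [y Hy]]; first by exists 0.
have pk := max_prime (Mm k).
case: (classic (exists j, j \in l /\ forall a, M j a -> M k a)) => [[j [jl sub]]|nex].
  exists y => i; rewrite inE => /orP [/eqP ->|il]; last exact: Hy.
  apply: (gen_sub _ (Hy j jl)).
  have [hk k1 _] := Mm k; have [_ _ mj] := Mm j.
  exact: (mj _ hk sub k1).
have [e [ne he]] : exists e, ~ M k e /\ forall j, j \in l -> M j e.
  apply: avoid_e => // j jl; split; first by case: (Mm j).
  apply: NNPP => nn; apply: nex; exists j; split=> // a Ma.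
  by apply: NNPP => nka; apply: nn; exists a.
have [[k0 kD kM] k1 kmax] := Mm k.
pose J := fun z => exists u c, M k u /\ z = u + c * e.
have hJ : ideal J.
  split.
  - by exists 0, 0; rewrite mul0r addr0.
  - move=> z1 z2 [u1 [c1 [h1 ->]]] [u2 [c2 [h2 ->]]].
    exists (u1 + u2), (c1 + c2); split; first exact: kD.
    by rewrite mulrDl addrACA.
  - move=> a z [u [c [h ->]]]; exists (a * u), (a * c); split; first exact: kM.
    by rewrite mulrDr mulrA.
have mJ : forall z, M k z -> J z by move=> z mz; exists z, 0; rewrite mul0r addr0.
have [u [c [Mu e1]]] : J 1.
  apply: NNPP => nJ1; apply: ne; apply: (kmax J hJ mJ nJ1).
  by exists 0, 1; rewrite add0r mul1r.
have nu : forall j, j \in l -> ~ M j u.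
  move=> j jl Mju; have [[_ jD jM] j1 _] := Mm j; apply: j1.
  by rewrite e1; apply: jD => //; apply: jM; apply: he.
exists (u *: y + e *: X k) => j; rewrite inE => /orP [/eqP ->|jl].
  have [s0 [a0 [ns0 h0]]] := gX k y.
  apply: (gen_trans (w := u * a0 + s0 * e) (s := s0) pk (gX k)).
    move=> Mw; apply: (prime_mul pk ns0 ne).
    apply: (ideal_sub (x := s0 * e) (y := u * a0) (And3 k0 kD kM)).
      by rewrite addrC.
    by rewrite mulrC; apply: kM.
  by rewrite scalerDr !scalerA [s0 * u]mulrC -[(u * s0) *: y]scalerA h0 scalerA scalerDl.
have [s1 [a1 [ns1 h1]]] := Hy j jl (X k).
have [[j0 jD jM] _ _] := Mm j; have pj := max_prime (Mm j).
apply: (gen_trans (w := s1 * u + e * a1) (s := s1) pj (Hy j jl)).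
  move=> Mw; apply: (prime_mul pj ns1 (nu j jl)).
  apply: (ideal_sub (y := e * a1) (And3 j0 jD jM) Mw).
  by rewrite mulrC; apply: jM; apply: he.
by rewrite scalerDr !scalerA [s1 * e]mulrC -[(e * s1) *: X k]scalerA h1 scalerA scalerDl.
Qed.

Lemma uniform (N : nat) (g : 'I_N -> L) (l : seq 'I_N) (p : A -> Prop) (S : L -> Prop) y :
  prime_ideal p -> submodule S -> S y -> gen p y ->
  exists s, ~ p s /\ forall i, i \in l -> S (s *: g i).
Proof.
move=> pp [S0 SD SZ] Sy gy; elim: l => [|i l [s [ns hs]]].
  by exists 1; split=> //; case: pp.
have [t [b [nt ht]]] := gy (g i).
exists (t * s); split; first exact: prime_mul.
move=> j; rewrite inE => /orP [/eqP ->|jl].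
  by rewrite mulrC -scalerA ht scalerA; apply: SZ.
by rewrite -scalerA; apply: SZ; apply: hs.
Qed.

End Main.

Unset Implicit Arguments.
Theorem corollary4p10 (A : comPzRingType) (L : lmodType A) (n : nat)
    (Ls : 'I_n -> L -> Prop) :
  fin_generated L -> projective L -> const_rank1 L ->
  (forall k, submodule (Ls k)) ->
  (forall x : L, exists k : 'I_n, Ls k x) ->
  exists k : 'I_n, forall x : L, Ls k x.
Proof.
move=> [N [g Hg]] _ Hr Hsub Hcov.
apply: NNPP => nex.
pose I k := fun a : A => forall x, Ls k (a *: x).
have hI k : ideal (I k).
  have [S0 SD SZ] := Hsub k; split.
  - by move=> x; rewrite scale0r.
  - by move=> a b ha hb x; rewrite scalerDl; apply: SD.
  - by move=> a b hb x; rewrite -scalerA; apply: SZ.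
have nI k : ~ I k 1.
  move=> h; apply: nex; exists k => x; have := h x; by rewrite scale1r.
have Hm k := exists_max (hI k) (nI k).
pose M k := proj1_sig (constructive_indefinite_description _ (Hm k)).
have MP k : maxideal (M k) /\ forall x, I k x -> M k x :=
  proj2_sig (constructive_indefinite_description _ (Hm k)).
have HX k := Hr (M k) (max_prime (proj1 (MP k))).
pose X k := proj1_sig (constructive_indefinite_description _ (HX k)).
have XP k := proj2_sig (constructive_indefinite_description _ (HX k)).
have [y Hy] := @avoid A L n M X (enum 'I_n) (fun k => proj1 (MP k)) (fun k => proj1 (XP k)).
have [k Lky] := Hcov y.
have gy : gen (M k) y by apply: Hy; rewrite mem_enum.
have [s [ns hs]] := uniform g (enum 'I_N) (max_prime (proj1 (MP k))) (Hsub k) Lky gy.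
apply: ns; apply: (proj2 (MP k)) => x.
have [c ->] := Hg x.
have [S0 SD SZ] := Hsub k.
rewrite scaler_sumr; apply: (big_ind (Ls k)) => // i _.
by rewrite scalerA mulrC -scalerA; apply: SZ; apply: hs; rewrite mem_enum.
Qed.
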